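(* Let $q=2v+1$ be a prime power where $v=k_1k_2\cdots k_r$ with $k_1,\dots,k_r$ pairwise coprime odd integers, each $k_i\ge 3$. Then there exists a $(v,\{k_1,\dots,k_r\})$ Heffter space over the additive group of $\mathbb F_q$.
   Context: A half-set of an abelian group $G$ of odd order $2v+1\ge7$ is a subset $V\subseteq G\setminus\{0\}$ containing exactly one element of each pair $\{g,-g\}$, $g\ne0$. A $(v,k)$ Heffter system on $V$ is a partition of $V$ into blocks of size $k$, each summing to $0$ in $G$. A $(v,\{k_1,\dots,k_r\})$ Heffter space over $G$ is a partial linear space (any two distinct points lie in at most one block) with point set a half-set $V$ of $G$, together with a resolution of its blocks into $r$ parallel classes $\mathcal P_1,\dots,\mathcal P_r$ (each a partition of $V$), where $\mathcal P_i$ is a $(v,k_i)$ Heffter system. *)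

(* Defs.v *)
From HB Require Import structures.
From mathcomp Require Import all_boot all_order all_algebra all_field.
Set Implicit Arguments. Unset Strict Implicit. Unset Printing Implicit Defensive.
Import GRing.Theory.
Local Open Scope ring_scope.

Definition half_set (G : finZmodType) (V : {set G}) : Prop :=
  (0 \notin V) /\ (forall g : G, g != 0 -> (g \in V) != (- g \in V)).

Definition heffter_system (G : finZmodType) (V : {set G}) (k : nat)
    (P : {set {set G}}) : Prop :=
  partition P V /\
  (forall B, B \in P -> #|B| = k /\ \sum_(x in B) x = 0).

(* A (v,{k_1,...,k_r}) Heffter space over G with ks = [:: k_1; ...; k_r]:
   a half-set V, parallel classes P_i (i < r) with P_i a (v,k_i) Heffter
   system on V, and the blocks (counted over all classes, as a resolution)
   form a partial linear space: two distinct blocks share at most one point. *)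
Definition heffter_space (G : finZmodType) (ks : seq nat) (V : {set G})
    (P : 'I_(size ks) -> {set {set G}}) : Prop :=
  half_set V /\
  (forall i : 'I_(size ks), heffter_system V (nth 0%N ks i) (P i)) /\
  (forall (i j : 'I_(size ks)) (B B' : {set G}),
      B \in P i -> B' \in P j -> (i, B) != (j, B') -> #|B :&: B'| <= 1)%N.

(* Main.v *)
Require Import Defs.
From HB Require Import structures.
From mathcomp Require Import all_boot all_order all_algebra all_field.
Set Implicit Arguments. Unset Strict Implicit. Unset Printing Implicit Defensive.
Import GRing.Theory.
Local Open Scope ring_scope.
Lemma coprime_root1 (F : fieldType) (h : F) (a b : nat) :
  (0 < a)%N -> coprime a b -> h ^+ a = 1 -> h ^+ b = 1 -> h = 1.
Proof.
move=> a0 cab ha hb.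
have [c _] := Bezoutl b a0.
rewrite (eqP cab) => /dvdnP [d hd].
have : h ^+ (1 + c * b) = h ^+ (d * a) by rewrite hd.
by rewrite exprD expr1 [(c * b)%N]mulnC [(d * a)%N]mulnC !exprM hb ha !expr1n mulr1.
Qed.

Lemma exists_prim (F : finFieldType) : exists z : F, (#|F|.-1).-primitive_root z.
Proof.
have hF : (1 < #|F|)%N.
  by rewrite (cardD1 (0:F)) (cardD1 (1:F)) !inE oner_neq0.
have : has (#|F|.-1).-primitive_root (enum (predC1 (0:F))).
  apply: cyclic.has_prim_root.
  - by rewrite -ltnS prednK // ltnW.
  - apply/allP => x; rewrite mem_enum /= => x0.
    apply/unity_rootP; apply: (mulfI x0).
    by rewrite -exprS prednK ?expf_card ?mulr1 // ltnW.
  - exact: enum_uniq.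
  - by rewrite -cardE cardC1.
by case/hasP=> z _ hz; exists z.
Qed.
Theorem theorem3p2 (F : finFieldType) (ks : seq nat) :
  (0 < size ks)%N ->
  all odd ks ->
  all (fun k => 3 <= k)%N ks ->
  pairwise coprime ks ->
  #|F| = (2 * \prod_(k <- ks) k + 1)%N ->
  exists (V : {set F}) (P : 'I_(size ks) -> {set {set F}}),
    @heffter_space F ks V P.
Proof.
move=> _ hodd h3 hcop hF.
set v := (\prod_(k <- ks) k)%N in hF.
have vodd : odd v by rewrite /v; elim: ks hodd {h3 hcop hF v} => [|a s IH] /=;
  rewrite ?big_nil ?big_cons // => /andP[oa os]; rewrite oddM oa IH.
have v0 : (0 < v)%N by case: (v) vodd.
have kdv : forall i : 'I_(size ks), (nth 0%N ks i %| v)%N.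
  move=> i; rewrite /v (big_rem (nth 0%N ks i)) ?mem_nth //=; exact: dvdn_mulr.
have k3 : forall i : 'I_(size ks), (3 <= nth 0%N ks i)%N.
  by move=> i; apply: (allP h3); rewrite mem_nth.
have [z zp] := exists_prim F.
rewrite hF addn1 /= in zp.
have zv : z ^+ v = -1.
  have : z ^+ v != 1.
    rewrite -(expr0 z) (eq_prim_root_expr zp) mod0n modn_small //.
      by rewrite -lt0n.
    by rewrite mul2n -addnn -{1}(addn0 v) ltn_add2l.
  have : (z ^+ v - 1) * (z ^+ v + 1) = 0.
    by rewrite -subr_sqr -exprM mulnC (prim_expr_order zp) expr1n subrr.
  move/eqP; rewrite mulf_eq0 subr_eq0 => /orP[->//|].
  by rewrite addr_eq0 => /eqP.
have n11 : (1 : F) != -1.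
  rewrite -zv -(expr0 z) (eq_prim_root_expr zp) mod0n eq_sym modn_small //.
    by rewrite -lt0n.
  by rewrite mul2n -addnn -{1}(addn0 v) ltn_add2l.
have pm : forall x : F, x != 0 -> x ^+ v = 1 \/ x ^+ v = -1.
  move=> x x0.
  have h2 : x ^+ (2 * v) = 1.
    apply: (mulfI x0); rewrite -exprS -addn1 -hF expf_card mulr1 //.
  have : (x ^+ v - 1) * (x ^+ v + 1) = 0.
    by rewrite -subr_sqr -exprM mulnC h2 expr1n subrr.
  move/eqP; rewrite mulf_eq0 subr_eq0 addr_eq0 => /orP[/eqP|/eqP]; by [left|right].
set V := [set x : F | x ^+ v == 1].
have V0 : forall x, x \in V -> x != 0.
  move=> x; rewrite inE; apply: contraTneq => ->; rewrite expr0n eq_sym.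
  by move: v0; rewrite lt0n => /negPf ->; apply: oner_neq0.
have blk : forall k, (k %| v)%N -> (2 < k)%N -> forall x, x \in V ->
   #|[set y in V | x ^+ k == y ^+ k]| = k /\ \sum_(y in [set y in V | x ^+ k == y ^+ k]) y = 0.
  move=> k kv k2 x xV.
  have kv2 : (k %| 2 * v)%N by apply: dvdn_mull.
  have wp := dvdn_prim_root zp kv2.
  set w := z ^+ _ in wp.
  have x0 := V0 x xV.
  have wv : w ^+ v = 1.
    by rewrite -(divnK kv) mulnC exprM (prim_expr_order wp) expr1n.
  have eB : [set y in V | x ^+ k == y ^+ k] = [set x * w ^+ j | j : 'I_k].
    apply/setP => y; rewrite !inE; apply/andP/imsetP.
    - move=> [_ /eqP hy].
      have : (y / x) ^+ k = 1.
        by rewrite exprMn exprVn -hy divff // expf_neq0.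
      move/(prim_rootP wp) => [j hj]; exists j => //.
      by rewrite -hj mulrC divfK.
    - move=> [j _ ->]; split.
      + by rewrite inE in xV; rewrite exprMn -exprM mulnC exprM wv expr1n mulr1.
      + by rewrite exprMn -exprM mulnC exprM (prim_expr_order wp) expr1n mulr1 eqxx.
  have inj : injective (fun j : 'I_k => x * w ^+ j).
    move=> i j /(mulfI x0) /eqP; rewrite (eq_prim_root_expr wp) !modn_small //.
    by move/eqP/val_inj.
  rewrite eB card_imset // card_ord; split => //.
  rewrite big_imset /=; last by move=> i j _ _; apply: inj.
  rewrite -mulr_sumr.
  have : (w - 1) * \sum_(j < k) w ^+ j = 0 by rewrite -subrX1 (prim_expr_order wp) subrr.
  move/eqP; rewrite mulf_eq0 subr_eq0 => /orP[|/eqP ->]; last by rewrite mulr0.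
  by rewrite -{1}(expr1 w) -(expr0 w) (eq_prim_root_expr wp) !modn_small //; apply: leq_trans k2.
pose R (i : 'I_(size ks)) := fun x y : F => x ^+ nth 0%N ks i == y ^+ nth 0%N ks i.
have part : forall i, partition (equivalence_partition (R i) V) V.
  move=> i; apply: equivalence_partitionP => x y t _ _ _ /=.
  rewrite /R; split; first exact: eqxx.
  by move/eqP => ->.
exists V, (fun i => equivalence_partition (R i) V).
split; [|split].
- split; first by rewrite inE expr0n; move: v0; rewrite lt0n => /negPf ->; rewrite eq_sym oner_eq0.
  move=> g g0; rewrite !inE exprNn -signr_odd vodd expr1 mulN1r.
  have m1 : (-1 == 1 :> F) = false by rewrite eq_sym (negPf n11).
  by case: (pm g g0) => ->; rewrite ?opprK eqxx m1.
- move=> i; split; first exact: part.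
  move=> B /imsetP [x xV ->]; exact: blk (kdv i) (k3 i) x xV.
move=> i j B B' /imsetP [x xV ->] /imsetP [x' x'V ->].
case: (eqVneq i j) => [<-|ij].
  rewrite xpair_eqE eqxx /= => neq.
  have := part i; case/and3P => _ /trivIsetP tI _.
  rewrite (disjoint_setI0 (tI _ _ _ _ neq)) ?cards0 //; apply: imset_f => //.
move=> _; apply/card_le1_eqP => y1 y2.
rewrite !inE /R => /andP[/andP[y1V /eqP e1] /andP[_ /eqP e1']] /andP[/andP[y2V /eqP e2] /andP[_ /eqP e2']].
have y20 : y2 != 0 by apply: V0; rewrite inE.
apply/eqP; rewrite -subr_eq0; apply/eqP.
suff : y1 / y2 = 1 by move/(canRL (divfK y20)); rewrite mul1r => ->; rewrite subrr.
have cij : coprime (nth 0%N ks i) (nth 0%N ks j).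
  case: (ltngtP i j) => [lt|gt|/val_inj eq]; last by rewrite eq eqxx in ij.
  - by apply: (pairwiseP 0%N hcop) => //; rewrite inE ltn_ord.
  - by rewrite coprime_sym; apply: (pairwiseP 0%N hcop) => //; rewrite inE ltn_ord.
apply: (coprime_root1 _ cij); first by apply: leq_trans (k3 i).
- by rewrite exprMn exprVn -e1 e2 divff // expf_neq0.
- by rewrite exprMn exprVn -e1' e2' divff // expf_neq0.
Qed.
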